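(* Let $N:[0,\infty)\to\mathbb R$, $T>0$, $A>0$, an integer $\ell\ge0$, $\delta>0$, and a finite set $\mathcal T\subset[0,T]$ with $\operatorname{sep}(\mathcal T)\ge4(\ell+1)\delta$ be given. Let \[ \widehat{\mathcal T}\subset\Big\{t\in[0,T]:\Big|\tfrac1\delta\Delta^{(\ell+1)}_\delta N(t)\Big|\ge\tfrac A2\Big\} \] be a subset of maximal size satisfying $\operatorname{sep}(\widehat{\mathcal T})>2(\ell+1)\delta$. If \[ \mathcal T\subseteq\Big\{t\in[\ell\delta,T]:\Big|\tfrac1\delta\Delta^{(\ell+1)}_\delta N(t)\Big|\ge\tfrac A2\Big\}\subseteq\big\{t\in[0,T]:\exists t'\in\mathcal T\text{ with }|t-t'|\le(\ell+1)\delta\big\}, \] then $|\mathcal T|=|\widehat{\mathcal T}|$ and $d_{\max}(\mathcal T,\widehat{\mathcal T})\le2(\ell+1)\delta$.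
   Context: $\Delta^{(j)}_\delta N(t):=\sum_{i=0}^{j}(-1)^{j-i}\binom{j}{i}N(t+(i-j+1)\delta)$, defined for $t\ge(j-1)\delta$ (sets above consist of $t$ where it is defined). $\operatorname{sep}(S):=\min\{|a-b|:a,b\in S,a\ne b\}$, $=\infty$ if no such pair. For finite $\mathcal S,\mathcal T$ with $|\mathcal S|=|\mathcal T|$: $d_{\max}=0$ if both empty, otherwise with sorted elements $s_1<\dots<s_k$, $t_1<\dots<t_k$, $d_{\max}(\mathcal S,\mathcal T)=\max_i|s_i-t_i|$. *)

(* Defs.v *)
From HB Require Import structures.
From mathcomp Require Import all_boot all_order all_algebra.
From mathcomp Require Import reals constructive_ereal.
Set Implicit Arguments. Unset Strict Implicit. Unset Printing Implicit Defensive.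
Import Order.TTheory GRing.Theory Num.Theory.
Local Open Scope ring_scope.

Definition fdiff (R : realType) (N : R -> R) (delta : R) (j : nat) (t : R) : R :=
  \sum_(i < j.+1)
     (-1) ^+ (j - i) * ('C(j, i))%:R * N (t + ((i%:R - j%:R + 1) * delta)).

(* sep(S) = min{|a-b| : a,b in S, a <> b}, = +oo if no such pair.
   Finite sets are represented by duplicate-free sequences. *)
Definition sep (R : realType) (s : seq R) : \bar R :=
  \big[mine/+oo%E]_(a <- s) \big[mine/+oo%E]_(b <- s | a != b) (`|a - b|)%:E.

Definition dmax (R : realType) (s t : seq R) : R :=
  \big[Num.max/0]_(i < size s)
     `|nth 0 (sort <=%R s) i - nth 0 (sort <=%R t) i|.

(* Main.v *)
Require Import Defs.
From HB Require Import structures.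
From mathcomp Require Import all_boot all_order all_algebra.
From mathcomp Require Import reals constructive_ereal.
From mathcomp Require Import lra.
Import Order.TTheory GRing.Theory Num.Theory.
Local Open Scope ring_scope.

Lemma bigmin_le_term (R : realType) (I : eqType) (r : seq I) (P : pred I)
  (F : I -> \bar R) x :
  x \in r -> P x -> (\big[mine/+oo%E]_(i <- r | P i) F i <= F x)%E.
Proof.
elim: r => [//|a r IH]; rewrite in_cons big_cons => /orP [/eqP -> Px|xr Px].
  by rewrite Px ge_min lexx.
case: (P a); last exact: IH.
by rewrite ge_min (IH xr Px) orbT.
Qed.

Lemma sep_term (R : realType) (s : seq R) a b :
  a \in s -> b \in s -> a != b -> (sep s <= (`|a - b|)%:E)%E.
Proof.
move=> as_ bs ab; rewrite /sep.
have h1 := bigmin_le_term _ _ _ predT (fun a => \big[mine/+oo%E]_(b <- s | a != b) (`|a - b|)%:E) _ as_ (isT : predT a).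
have h2 := bigmin_le_term _ _ _ (fun b => a != b) (fun b => (`|a - b|)%:E) _ bs ab.

rewrite /= in h1 h2. exact: le_trans h1 h2.
Qed.

Lemma sep_le (R : realType) (s : seq R) c a b :
  (c%:E <= sep s)%E -> a \in s -> b \in s -> a != b -> c <= `|a - b|.
Proof.
move=> H as_ bs ab; rewrite -lee_fin; exact: le_trans H (sep_term _ _ _ _ as_ bs ab).
Qed.

Lemma sep_lt (R : realType) (s : seq R) c a b :
  (c%:E < sep s)%E -> a \in s -> b \in s -> a != b -> c < `|a - b|.
Proof.
move=> H as_ bs ab; rewrite -lte_fin; exact: lt_le_trans H (sep_term _ _ _ _ as_ bs ab).
Qed.
Theorem proposition3p2 (R : realType) (N : R -> R) (Tm A delta : R) (l : nat)
  (Ts hatTs : seq R) :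
  0 < Tm -> 0 < A -> 0 < delta ->
  uniq Ts -> (forall t, t \in Ts -> 0 <= t <= Tm) ->
  ((4 * (l.+1)%:R * delta)%:E <= sep Ts)%E ->
  (* hatTs : a subset of maximal size of the superlevel set, with sep > 2(l+1)delta *)
  uniq hatTs ->
  (forall t, t \in hatTs ->
     [/\ 0 <= t <= Tm, l%:R * delta <= t
       & A / 2 <= `|delta^-1 * fdiff N delta l.+1 t|]) ->
  ((2 * (l.+1)%:R * delta)%:E < sep hatTs)%E ->
  (forall U : seq R, uniq U ->
     (forall t, t \in U ->
        [/\ 0 <= t <= Tm, l%:R * delta <= t
          & A / 2 <= `|delta^-1 * fdiff N delta l.+1 t|]) ->
     ((2 * (l.+1)%:R * delta)%:E < sep U)%E ->
     (size U <= size hatTs)%N) ->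
  (* the sandwich hypothesis *)
  (forall t, t \in Ts ->
     l%:R * delta <= t <= Tm /\ A / 2 <= `|delta^-1 * fdiff N delta l.+1 t|) ->
  (forall t, l%:R * delta <= t <= Tm ->
     A / 2 <= `|delta^-1 * fdiff N delta l.+1 t| ->
     0 <= t <= Tm /\ exists2 t', t' \in Ts & `|t - t'| <= (l.+1)%:R * delta) ->
  size Ts = size hatTs /\ dmax Ts hatTs <= 2 * (l.+1)%:R * delta.
Proof.
move=> Tm0 A0 d0 uTs TsB sepTs uH HB sepH maxH TsS SN.
have L0 : 0 < (l.+1)%:R :> R by rewrite ltr0n.
have D0 : 0 < (l.+1)%:R * delta by rewrite mulr_gt0.
have sepT a b : a \in Ts -> b \in Ts -> a != b ->
    4 * ((l.+1)%:R * delta) <= `|a - b|.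
  by move=> aT bT ab; rewrite mulrA; exact: sep_le sepTs aT bT ab.
have sepHat a b : a \in hatTs -> b \in hatTs -> a != b ->
    2 * ((l.+1)%:R * delta) < `|a - b|.
  by move=> aT bT ab; rewrite mulrA; exact: sep_lt sepH aT bT ab.
have near h : h \in hatTs -> has (fun t => `|h - t| <= (l.+1)%:R * delta) Ts.
  move=> hh; case: (HB h hh) => /andP[h0 hT] hl hA.
  have [_ [t' t'T ht']] := SN h (andb_true_intro (conj hl hT)) hA.
  by apply/hasP; exists t'.
pose f h := nth 0 Ts (find (fun t => `|h - t| <= (l.+1)%:R * delta) Ts).
have fT h : h \in hatTs -> f h \in Ts.
  by move=> hh; apply: mem_nth; rewrite -has_find; exact: near.
have fD h : h \in hatTs -> `|h - f h| <= (l.+1)%:R * delta.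
  by move=> hh; exact: (nth_find 0 (near h hh)).
have finj : {in hatTs &, injective f}.
  move=> x y hx hy fxy; apply/eqP; apply: contraT => nxy.
  have := sepHat x y hx hy nxy; have := fD x hx; have := fD y hy.
  rewrite fxy !ler_norml ltr_normr => /andP[? ?] /andP[? ?] /orP[] ?; lra.
have fmono : {in hatTs &, {homo f : x y / x <= y}}.
  move=> x y hx hy xy; case: (eqVneq x y) => [->//|nxy].
  rewrite leNgt; apply/negP => fyx.
  have nf : f x != f y by apply: contra nxy => /eqP /(finj _ _ hx hy) ->.
  have := sepT _ _ (fT x hx) (fT y hy) nf; have := fD x hx; have := fD y hy.
  rewrite !ler_norml ler_normr => /andP[? ?] /andP[? ?] /orP[] ?; lra.
pose hs := sort <=%R hatTs.
have phs : perm_eq hs hatTs by rewrite perm_sort.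
have mhs : hs =i hatTs by exact: mem_sort.
pose m := map f hs.
have sm : sorted <=%R m.
  apply: (homo_sorted_in fmono); last by apply: sort_sorted; exact: le_total.
  by apply/allP => x; rewrite mhs.
have um : uniq m.
  rewrite map_inj_in_uniq ?sort_uniq //.
  by move=> x y; rewrite !mhs; exact: finj.
have mT : {subset m <= Ts}.
  by move=> _ /mapP[x hx ->]; apply: fT; rewrite -mhs.
have s1 : (size Ts <= size hatTs)%N.
  apply: maxH => //.
    move=> t tT; have [/andP[t1 t2] t3] := TsS t tT.
    have /andP[t4 t5] := TsB t tT.
    by split => //; apply/andP.
  apply: lt_le_trans sepTs; rewrite lte_fin; lra.
have sz : (size Ts <= size m)%N by rewrite size_map size_sort.
have [szeq meq] := uniq_min_size um mT sz.
have pm : perm_eq m (sort <=%R Ts).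
  by apply: uniq_perm => //; [rewrite sort_uniq | move=> x; rewrite meq mem_sort].
have msort : m = sort <=%R Ts.
  exact: (sorted_eq le_trans le_anti sm (sort_sorted le_total Ts) pm).
have szh : size hs = size Ts by rewrite -szeq size_map.
split; first by rewrite -szh size_sort.
rewrite /dmax -/hs -msort.
apply: (big_ind (fun x => x <= 2 * (l.+1)%:R * delta)).
- lra.
- by move=> x y hx hy; rewrite ge_max hx hy.
move=> i _; have ii : (i < size hs)%N by rewrite szh ltn_ord.
rewrite (nth_map 0) // distrC.
have hi : nth 0 hs i \in hatTs by rewrite -mhs mem_nth.
have := fD _ hi; lra.
Qed.
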